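(* Let $H$ be a last-use opaque history (with unique writes) produced by some program. Then there are no transactions $T_i,T_j\in H$ such that (a) $T_i$ releases some variable $x$ early in $H$, (b) $H|T_i$ contains write executions $w_i(x,v)\to ok_i$ and $w_i(x,v')\to ok_i$ with the former preceding the latter in $H|T_i$, and (c) $H|T_j$ contains a read execution $r_j(x)\to v$ that precedes $w_i(x,v')\to ok_i$ in $H$. That is, last-use opacity does not support overwriting.
   Context: Standard TM model: transactions $T_i$ with operations $\mathit{init}_i$, $\mathit{read}_i(x)$, $\mathit{write}_i(x,v)$, $\mathit{tryC}_i$, $\mathit{tryA}_i$ (each an invocation/response; responses $ok_i$, values, $C_i$, or abort $A_i$); well-formed histories with unique writes; variables with domain $\mathbb{N}_0$, initial value $0$. Committed/aborted/commit-pending/live, completion (live transactions become aborted, commit-pending ones may commit), equivalence (same per-transaction subhistories), real-time order $\prec_H$, sequential histories as usual. $\mathit{Seq}(x)$: sequences of operation executions on $x$ in which each read returning a value returns the latest preceding written value (or $0$); sequential $S'$ legal iff $S'|x\in\mathit{Seq}(x)$ for all $x$. $\mathrm{vis}(S,T_i)$: subhistory of $S$ consisting of $S|T_j$ for $j=i$ or $T_j$ committed with $T_j\prec_S T_i$; legal transaction: $\mathrm{vis}$ legal. Early release: $T_i$ releases $x$ early in $H$ iff some prefix $P$ of $H$ has $T_i$ live and some $T_j$ with a complete read $r_j(x)\to v$ not preceded in $P|T_j$ by a write on $x$, preceded in $P$ by a write $w_i(x,v)$ of $T_i$. Last-use opacity (relative to the program $\mathcal{P}$ and processes $\Pi$ producing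 $H$; $\mathcal{H}(\mathcal{P},\Pi)$ = all producible histories): an invocation of $\mathit{write}_i(x,v)$ is the last write invocation on $x$ by $T_i$ in $H$ if no $H'\in\mathcal{H}(\mathcal{P},\Pi)$ extending $H$ contains a later invocation of $\mathit{write}_i(x,u)$ in $H'|T_i$; a last write is its complete execution with response $\neq A_i$; $T_i$ is decided on $x$ if $H|T_i$ contains such a last write $w_i(x,v)\to ok_i$. $S\Downarrow_C T_j$: $T_j$'s $\mathit{init}_j$ and its operations on variables it is decided on in $H$, followed by $\mathit{tryC}_j\to C_j$. For sequential $S$ equivalent to a completion of $H$, a last-use view of $T_i$ contains $S|T_j$ when $j=i$ or $T_j$ is committed with $T_j\prec_S T_i$; when $T_j$ is not committed in $S$, decided on some variable, $T_j\prec_S T_i$ and not $T_j\prec_H T_i$, it contains either $S\Downarrow_C T_j$ or nothing of $T_j$; otherwise nothing of $T_j$. $T_i$ is last-use legal in $S$ iff some last-use view is legal. Finite $H$ is final-state last-use opaque iff some sequential $S$ equivalent to a completion of $H$ preserves $\prec_H$, with committed transactions legal and others last-use legal; $H$ is last-use opaque iff every finite prefix is final-state last-use opaque. *)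

(* Defs.v *)
From Stdlib Require Import List Arith PeanoNat.
Import ListNotations.

(* Transaction identifiers, variables and values are natural numbers;
   the value domain is N_0 with initial value 0. *)
Definition tx := nat.
Definition var := nat.
Definition val := nat.

Inductive Inv : Type :=
| InvInit
| InvRead  (x : var)
| InvWrite (x : var) (v : val)
| InvTryC
| InvTryA.

Inductive Resp : Type :=
| RespOk
| RespVal (v : val)
| RespC
| RespA.

Inductive Event : Type :=
| EvInv  (i : tx) (o : Inv)
| EvResp (i : tx) (r : Resp).

Definition tid (e : Event) : tx :=
  match e with EvInv i _ => i | EvResp i _ => i end.

Definition history := list Event.

Definition proj (H : history) (i : tx) : history :=
  filter (fun e => Nat.eqb (tid e) i) H.

Fixpoint tids (H : history) : list tx :=
  match H with
  | [] => []
  | e :: H' => tid e :: remove Nat.eq_dec (tid e) (tids H')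
  end.

Definition prefix (P H : history) : Prop := exists s, H = P ++ s.

Definition matches (o : Inv) (r : Resp) : Prop :=
  r = RespA \/
  match o with
  | InvInit => r = RespOk
  | InvRead _ => exists v, r = RespVal v
  | InvWrite _ _ => r = RespOk
  | InvTryC => r = RespC
  | InvTryA => False
  end.

Definition terminal (r : Resp) : Prop := r = RespC \/ r = RespA.

Inductive wf_alt (i : tx) : history -> Prop :=
| wf_nil : wf_alt i []
| wf_pending o : wf_alt i [EvInv i o]
| wf_step o r h : matches o r -> ~ terminal r -> wf_alt i h ->
    wf_alt i (EvInv i o :: EvResp i r :: h)
| wf_term o r : matches o r -> terminal r ->
    wf_alt i [EvInv i o; EvResp i r].

Definition wf_tx (i : tx) (h : history) : Prop :=
  h = [] \/
  exists t, h = EvInv i InvInit :: t /\ wf_alt i h /\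
            ~ In (EvInv i InvInit) t.

Definition well_formed (H : history) : Prop := forall i, wf_tx i (proj H i).

Definition unique_writes (H : history) : Prop :=
  (forall p q i j x v,
      nth_error H p = Some (EvInv i (InvWrite x v)) ->
      nth_error H q = Some (EvInv j (InvWrite x v)) -> p = q) /\
  (forall p i x v, nth_error H p = Some (EvInv i (InvWrite x v)) -> v <> 0).

Definition exec (H : history) (p q : nat) (i : tx) (o : Inv) (r : Resp) : Prop :=
  nth_error H p = Some (EvInv i o) /\ p < q /\
  nth_error H q = Some (EvResp i r) /\
  (forall k e, p < k -> k < q -> nth_error H k = Some e -> tid e <> i).

Definition committed (H : history) (i : tx) : Prop := In (EvResp i RespC) H.
Definition aborted (H : history) (i : tx) : Prop := In (EvResp i RespA) H.
Definition completed (H : history) (i : tx) : Prop := committed H i \/ aborted H i.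
Definition live (H : history) (i : tx) : Prop := ~ completed H i.

Definition prec (H : history) (j i : tx) : Prop :=
  completed H j /\ In i (tids H) /\
  forall p q e1 e2, nth_error H p = Some e1 -> tid e1 = j ->
                    nth_error H q = Some e2 -> tid e2 = i -> p < q.

Definition compl_suffix (k : tx) (h e : history) : Prop :=
  match rev h with
  | [] => e = []
  | EvResp _ RespC :: _ => e = []
  | EvResp _ RespA :: _ => e = []
  | EvInv _ InvTryC :: _ => e = [EvResp k RespA] \/ e = [EvResp k RespC]
  | EvInv _ _ :: _ => e = [EvResp k RespA]
  | EvResp _ _ :: _ => e = [EvInv k InvTryA; EvResp k RespA]
  end.

Definition completion (H C : history) : Prop :=
  exists E, C = H ++ E /\ forall k, compl_suffix k (proj H k) (proj E k).

Definition equivalent (H1 H2 : history) : Prop :=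
  forall k, proj H1 k = proj H2 k.

Definition sequential (S : history) : Prop :=
  forall p q r ep eq er, p < q -> q < r ->
    nth_error S p = Some ep -> nth_error S q = Some eq ->
    nth_error S r = Some er -> tid ep = tid er -> tid eq = tid ep.

Definition op_var (o : Inv) : option var :=
  match o with InvRead x => Some x | InvWrite x _ => Some x | _ => None end.

Fixpoint next_resp (i : tx) (s : history) : option Resp :=
  match s with
  | [] => None
  | EvInv k _ :: s' => if Nat.eqb k i then None else next_resp i s'
  | EvResp k r :: s' => if Nat.eqb k i then Some r else next_resp i s'
  end.

Fixpoint op_execs (s : history) : list (Inv * option Resp) :=
  match s with
  | [] => []
  | EvInv i o :: s' => (o, next_resp i s') :: op_execs s'
  | EvResp _ _ :: s' => op_execs s'
  end.

Definition restrict_var (x : var) (s : history) : list (Inv * option Resp) :=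
  filter (fun oe => match op_var (fst oe) with
                    | Some y => Nat.eqb y x
                    | None => false end) (op_execs s).

Fixpoint seq_ok (cur : val) (l : list (Inv * option Resp)) : Prop :=
  match l with
  | [] => True
  | (InvRead _, Some (RespVal u)) :: l' => u = cur /\ seq_ok cur l'
  | (InvWrite _ u, Some RespOk) :: l' => seq_ok u l'
  | _ :: l' => seq_ok cur l'
  end.

Definition in_Seq (l : list (Inv * option Resp)) : Prop := seq_ok 0 l.

Definition legal (s : history) : Prop := forall x, in_Seq (restrict_var x s).

Inductive subhist (P : tx -> Prop) : history -> history -> Prop :=
| sh_nil : subhist P [] []
| sh_keep e s v : P (tid e) -> subhist P s v -> subhist P (e :: s) (e :: v)
| sh_drop e s v : ~ P (tid e) -> subhist P s v -> subhist P (e :: s) v.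

Definition vis (S : history) (i : tx) (V : history) : Prop :=
  subhist (fun j => j = i \/ (committed S j /\ prec S j i)) S V.

Definition legal_tx (S : history) (i : tx) : Prop :=
  exists V, vis S i V /\ legal V.

(* Hs plays the role of H(P,Pi): the histories producible by the program *)
Definition last_write_inv (Hs : history -> Prop) (H : history) (p : nat)
    (i : tx) (x : var) : Prop :=
  forall H', Hs H' -> prefix H H' ->
  forall q u, p < q -> nth_error H' q <> Some (EvInv i (InvWrite x u)).

Definition decided (Hs : history -> Prop) (H : history) (i : tx) (x : var) : Prop :=
  exists p q v, exec H p q i (InvWrite x v) RespOk /\ last_write_inv Hs H p i x.

Definition keepb (d : var -> bool) (o : Inv) : bool :=
  match o with
  | InvInit => true
  | InvRead x => d x
  | InvWrite x _ => d x
  | _ => false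
  end.

(* keep the operation executions (invocation+response) whose invocation
   satisfies keepb d; h is a per-transaction (alternating) subhistory *)
Fixpoint keep_ops (d : var -> bool) (h : history) : history :=
  match h with
  | EvInv k o :: EvResp k' r :: t =>
      (if keepb d o then [EvInv k o; EvResp k' r] else []) ++ keep_ops d t
  | _ :: t => keep_ops d t
  | [] => []
  end.

(* S ⇓C T_j, where d decides "T_j is decided on x in H" *)
Definition downC (d : var -> bool) (S : history) (j : tx) : history :=
  keep_ops d (proj S j) ++ [EvInv j InvTryC; EvResp j RespC].

(* the part of a last-use view of T_i contributed by T_j *)
Definition lu_part (Hs : history -> Prop) (H S : history) (i j : tx)
    (part : history) : Prop :=
  let full := (j = i \/ (committed S j /\ prec S j i)) in
  let opt := (~ committed S j /\ (exists x, decided Hs H j x) /\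
              prec S j i /\ ~ prec H j i) in
  (full /\ part = proj S j) \/
  (opt /\ (part = [] \/
           exists d : var -> bool,
             (forall x, d x = true <-> decided Hs H j x) /\
             part = downC d S j)) \/
  (~ full /\ ~ opt /\ part = []).

(* a last-use view of T_i in S (components placed in the order of S) *)
Definition lu_view (Hs : history -> Prop) (H S : history) (i : tx)
    (V : history) : Prop :=
  exists f : tx -> history,
    V = concat (map f (tids S)) /\
    forall j, In j (tids S) -> lu_part Hs H S i j (f j).

Definition lu_legal (Hs : history -> Prop) (H S : history) (i : tx) : Prop :=
  exists V, lu_view Hs H S i V /\ legal V.

Definition final_state_lu_opaque (Hs : history -> Prop) (H : history) : Prop :=
  exists C S, completion H C /\ equivalent S C /\ sequential S /\
    (forall j k, prec H j k -> prec S j k) /\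
    forall i, In i (tids S) ->
      (committed S i -> legal_tx S i) /\
      (~ committed S i -> lu_legal Hs H S i).

Definition lu_opaque (Hs : history -> Prop) (H : history) : Prop :=
  forall P, prefix P H -> final_state_lu_opaque Hs P.

Definition releases_early (H : history) (i : tx) (x : var) : Prop :=
  exists P, prefix P H /\ In i (tids P) /\ live P i /\
  exists j v pr qr pw qw rw,
    exec P pr qr j (InvRead x) (RespVal v) /\
    (forall k u, k < pr -> nth_error P k <> Some (EvInv j (InvWrite x u))) /\
    exec P pw qw i (InvWrite x v) rw /\ qw < pr.

(* Main.v *)
Require Import Defs.
From Stdlib Require Import List Arith PeanoNat Lia Classical.
Import ListNotations.

Lemma proj_app H1 H2 i : proj (H1 ++ H2) i = proj H1 i ++ proj H2 i.
Proof. unfold proj; apply filter_app. Qed.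

Lemma in_proj e H i : In e (proj H i) <-> In e H /\ tid e = i.
Proof. unfold proj; rewrite filter_In, Nat.eqb_eq; tauto. Qed.

Lemma proj_nil M i : (forall e, In e M -> tid e <> i) -> proj M i = [].
Proof.
  induction M as [|a M IH]; intros Hm; simpl; auto.
  destruct (Nat.eqb_spec (tid a) i). exfalso; apply (Hm a); simpl; auto.
  apply IH; intros; apply Hm; simpl; auto.
Qed.

Lemma exec_proj H p q i o r : exec H p q i o r ->
  exists A B, proj H i = A ++ EvInv i o :: EvResp i r :: B.
Proof.
  intros [Hp [Hpq [Hq Hmid]]].
  destruct (nth_error_split _ _ Hp) as [H1 [H2 [E1 L1]]]; subst H.
  rewrite nth_error_app2 in Hq by lia.
  destruct (q - length H1) as [|n] eqn:En; [lia|]. simpl in Hq.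
  destruct (nth_error_split _ _ Hq) as [M [H3 [E2 L2]]]; subst H2.
  assert (HM : proj M i = []).
  { apply proj_nil; intros e He. destruct (In_nth_error _ _ He) as [k Hk].
    assert (k < length M) by (apply nth_error_Some; congruence).
    apply (Hmid (length H1 + S k)); try lia.
    rewrite nth_error_app2 by lia. replace (length H1 + S k - length H1) with (S k) by lia.
    simpl. rewrite nth_error_app1 by (apply nth_error_Some; congruence). auto. }
  exists (proj H1 i), (proj H3 i).
  rewrite proj_app. simpl. rewrite Nat.eqb_refl. rewrite proj_app, HM. simpl. rewrite Nat.eqb_refl. reflexivity.
Qed.

Lemma next_resp_proj i s : next_resp i s =
  match proj s i with EvResp _ r :: _ => Some r | _ => None end.
Proof.
  induction s as [|e s IH]; simpl; auto.
  destruct e as [k o|k r]; simpl; destruct (Nat.eqb_spec k i); auto.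
Qed.

Lemma op_exec_of_proj V j A o r B :
  proj V j = A ++ EvInv j o :: EvResp j r :: B -> In (o, Some r) (op_execs V).
Proof.
  revert A. induction V as [|e V IH]; intros A HV.
  - destruct A; discriminate.
  - unfold proj in HV; simpl in HV. fold (proj V j) in HV.
    destruct (Nat.eqb_spec (tid e) j).
    + destruct A as [|a A].
      * simpl in HV. injection HV as -> HV'. simpl. left.
        rewrite next_resp_proj, HV'. auto.
      * simpl in HV. injection HV as -> HV'.
        destruct a; simpl; [right|]; eapply IH; eauto.
    + destruct e; simpl; [right|]; eapply IH; eauto.
Qed.

Lemma op_execs_in V o r : In (o, r) (op_execs V) -> exists k, In (EvInv k o) V.
Proof.
  induction V as [|e V IH]; simpl; [tauto|].
  destruct e as [k o'|k r']; simpl.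
  - intros [Heq|Hin]. injection Heq as -> _. eauto.
    destruct (IH Hin) as [k' ?]; eauto.
  - intros Hin; destruct (IH Hin) as [k' ?]; eauto.
Qed.

Lemma seq_contra v z : forall l cur, cur <> v ->
  (forall y r, ~ In (InvWrite y v, r) l) ->
  In (InvRead z, Some (RespVal v)) l -> seq_ok cur l -> False.
Proof.
  induction l as [|[o r] l IH]; intros cur Hc Hw Hr Hs; simpl in Hr; [auto|].
  destruct Hr as [Heq|Hr].
  - injection Heq as -> ->. simpl in Hs. destruct Hs; auto.
  - assert (Hw' : forall y r, ~ In (InvWrite y v, r) l)
      by (intros y r0 Hin; apply (Hw y r0); simpl; auto).
    destruct o; simpl in Hs;
      try (destruct r as [[]|]; try destruct Hs; eapply IH; eauto; fail).
    destruct r as [[]|]; try (eapply IH; eauto; fail).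
    eapply IH; [|eauto|eauto|eauto].
    intro; subst. apply (Hw x (Some RespOk)); simpl; auto.
Qed.
Lemma wf_term_last i h : wf_alt i h -> forall A k r B,
  h = A ++ EvResp k r :: B -> terminal r -> B = [].
Proof.
  induction 1; intros A k r0 B E T.
  - destruct A; discriminate.
  - destruct A as [|a [|b A]]; simpl in E; try discriminate; inversion E.
  - destruct A as [|a [|b A]]; simpl in E; try discriminate.
    + inversion E; subst; contradiction.
    + inversion E; subst. eapply IHwf_alt; eauto.
  - destruct A as [|a [|b A]]; simpl in E; try discriminate.
    + inversion E; auto.
    + inversion E. destruct A; discriminate.
Qed.

Lemma wf_tryC i h : wf_alt i h -> forall A k B,
  h = A ++ EvInv k InvTryC :: B -> B = [] \/ exists r, B = [EvResp i r].
Proof.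
  induction 1; intros A k B E.
  - destruct A; discriminate.
  - destruct A as [|a A]; simpl in E; inversion E; auto. destruct A; discriminate.
  - destruct A as [|a [|b A]]; simpl in E; try discriminate.
    + inversion E; subst. exfalso; apply H0. destruct H as [H|H]; [right; auto|].
      unfold terminal; simpl in H; auto.
    + inversion E; subst. eapply IHwf_alt; eauto.
  - destruct A as [|a [|b A]]; simpl in E; try discriminate.
    + inversion E; subst. right; eauto.
    + inversion E. destruct A; discriminate.
Qed.

Lemma keep_ops_in d : forall n h, length h <= n -> forall e, In e (keep_ops d h) ->
  In e h /\ (forall k x u, e = EvInv k (InvWrite x u) -> d x = true).
Proof.
  induction n; intros h L e Hin.
  - destruct h; simpl in *; [tauto|lia].
  - destruct h as [|a h]; simpl in Hin; [tauto|].
    destruct a as [k o|k r].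
    + destruct h as [|b h]; [simpl in Hin; tauto|].
      destruct b as [k' o'|k' r].
      * destruct (IHn (EvInv k' o' :: h)) with (e := e) as [? ?]; simpl in *; auto; lia.
      * apply in_app_or in Hin. destruct Hin as [Hin|Hin].
        -- destruct (keepb d o) eqn:Kb; simpl in Hin; [|tauto].
           destruct Hin as [<-|[<-|[]]]; split; simpl; auto;
             intros k0 x u Heq; try discriminate. injection Heq; intros; subst; exact Kb.
        -- destruct (IHn h) with (e := e) as [? ?]; simpl in *; auto; lia.
    + destruct (IHn h) with (e := e) as [? ?]; simpl in *; auto; lia.
Qed.

Lemma compl_events k h e : compl_suffix k h e -> forall ev, In ev e ->
  (exists k' r, ev = EvResp k' r) \/ ev = EvInv k InvTryA.
Proof.
  unfold compl_suffix. intros C ev Hin.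
  destruct (rev h) as [|[k1 o|k1 r] t];
    [subst; destruct Hin|..].
  - destruct o; try (subst e; simpl in Hin; destruct Hin as [<-|[]]; eauto).
    destruct C as [C|C]; subst; simpl in Hin; destruct Hin as [<-|[]]; eauto.
  - destruct r; subst; simpl in Hin; try tauto.
    all: destruct Hin as [<-|[<-|[]]]; eauto.
Qed.

Lemma compl_commit k h e k' : compl_suffix k h e -> In (EvResp k' RespC) e ->
  exists h' k'', rev h = EvInv k'' InvTryC :: h'.
Proof.
  unfold compl_suffix. intros C Hin.
  destruct (rev h) as [|[k1 o|k1 r] t];
    [subst; destruct Hin|..].
  - destruct o; try (subst e; simpl in Hin; destruct Hin as [Hx|[]]; discriminate).
    eauto.
  - destruct r; subst; simpl in Hin; try tauto.
    all: destruct Hin as [Hx|[Hx|[]]]; discriminate.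
Qed.

Lemma subhist_in P S V : subhist P S V -> forall e, In e V -> In e S /\ P (tid e).
Proof.
  induction 1; intros e0 Hin; simpl in *; [tauto| |].
  - destruct Hin as [<-|Hin]; auto. destruct (IHsubhist _ Hin); auto.
  - destruct (IHsubhist _ Hin); auto.
Qed.

Lemma subhist_proj P S V : subhist P S V -> forall j, P j -> proj V j = proj S j.
Proof.
  induction 1; intros j Pj; unfold proj in *; simpl; auto.
  - rewrite IHsubhist; auto.
  - destruct (Nat.eqb_spec (tid e) j); [subst; contradiction|]. auto.
Qed.

Lemma concat_split {A B : Type} (f : A -> list B) l j : In j l ->
  exists X Y, concat (map f l) = X ++ f j ++ Y.
Proof.
  intros Hj. destruct (in_split _ _ Hj) as [l1 [l2 ->]].
  rewrite map_app, concat_app. simpl. eauto.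
Qed.

Lemma in_tids e H : In e H -> In (tid e) (tids H).
Proof.
  induction H as [|a H IH]; simpl; [tauto|]. intros [<-|Hin]; auto.
  destruct (Nat.eq_dec (tid a) (tid e)); auto.
  right. apply in_in_remove; auto.
Qed.

Lemma proj_proj h j : proj (proj h j) j = proj h j.
Proof. unfold proj. induction h as [|a h IH]; simpl; auto.
  destruct (Nat.eqb (tid a) j) eqn:E; simpl; rewrite ?E, IH; auto. Qed.

Theorem mainTheorem6 :
  forall (Hs : history -> Prop) (H : history),
    Hs H -> well_formed H -> unique_writes H -> lu_opaque Hs H ->
    ~ exists (i j : tx) (x : var) (v v' : val) (p1 q1 p2 q2 pr qr : nat),
        i <> j /\
        releases_early H i x /\
        exec H p1 q1 i (InvWrite x v) RespOk /\
        exec H p2 q2 i (InvWrite x v') RespOk /\ p1 < p2 /\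
        exec H pr qr j (InvRead x) (RespVal v) /\ qr < p2.
Proof.
  intros Hs H HsH Hwf Huw Hop
    [i [j [x [v [v' [p1 [q1 [p2 [q2 [pr [qr [Hij [_ [E1 [E2 [Hp12 [Er Hqr]]]]]]]]]]]]]]]]].
  set (n := S qr). set (P := firstn n H). set (R := skipn n H).
  assert (HPR : H = P ++ R) by (unfold P, R; symmetry; apply firstn_skipn).
  assert (HPH : prefix P H) by (exists R; exact HPR).
  assert (ErP : exec P pr qr j (InvRead x) (RespVal v)).
  { destruct Er as [A1 [A2 [A3 A4]]]. unfold P.
    split; [|split; [|split]].
    - rewrite nth_error_firstn. destruct (Nat.ltb_spec pr n); auto; unfold n in *; lia.
    - auto.
    - rewrite nth_error_firstn. destruct (Nat.ltb_spec qr n); auto; unfold n in *; lia.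
    - intros k e K1 K2 K3. rewrite nth_error_firstn in K3.
      destruct (Nat.ltb_spec k n); [|discriminate]. eauto. }
  destruct (Hop P HPH) as [C [S [[E [HC Hcs]] [Heq [_ [_ Hall]]]]]].
  assert (inSC : forall e, In e S -> In e C).
  { intros e He. assert (In e (proj S (tid e))) by (apply in_proj; auto).
    rewrite Heq in H0. apply in_proj in H0. tauto. }
  assert (inCS : forall e, In e C -> In e S).
  { intros e He. assert (In e (proj C (tid e))) by (apply in_proj; auto).
    rewrite <- Heq in H0. apply in_proj in H0. tauto. }
  assert (Hv0 : v <> 0) by (destruct E1 as [E1a _]; exact (proj2 Huw _ _ _ _ E1a)).
  assert (writeS : forall k, In (EvInv k (InvWrite x v)) S -> k = i).
  { intros k Hk. apply inSC in Hk. rewrite HC in Hk. apply in_app_or in Hk.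
    destruct Hk as [Hk|Hk].
    - assert (Hk' : In (EvInv k (InvWrite x v)) H) by (rewrite HPR; apply in_or_app; auto).
      destruct (In_nth_error _ _ Hk') as [p Hp].
      destruct E1 as [E1a _].
      pose proof (proj1 Huw _ _ _ _ _ _ Hp E1a). subst p. rewrite Hp in E1a.
      congruence.
    - assert (Hk' : In (EvInv k (InvWrite x v)) (proj E k)) by (apply in_proj; auto).
      destruct (compl_events _ _ _ (Hcs k) _ Hk') as [[? [? ?]]|?]; discriminate. }
  assert (WR : In (EvInv i (InvWrite x v')) (proj R i)).
  { apply in_proj; split; auto. destruct E2 as [E2a _].
    apply (nth_error_In _ (p2 - n)). unfold R. rewrite nth_error_skipn.
    replace (n + (p2 - n)) with p2 by (unfold n in *; lia). auto. }
  assert (HprojH : proj H i = proj P i ++ proj R i) by (rewrite HPR; apply proj_app).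
  assert (WF : wf_alt i (proj H i)).
  { destruct (Hwf i) as [Hn|[t [_ [W _]]]]; auto.
    exfalso. rewrite HprojH in Hn. apply app_eq_nil in Hn.
    rewrite (proj2 Hn) in WR. destruct WR. }
  assert (notcommit : ~ committed S i).
  { intros Hc. apply inSC in Hc. rewrite HC in Hc. apply in_app_or in Hc.
    destruct Hc as [Hc|Hc].
    - assert (Hc' : In (EvResp i RespC) (proj P i)) by (apply in_proj; auto).
      destruct (in_split _ _ Hc') as [A [B HAB]].
      rewrite HprojH, HAB, <- app_assoc in WF. simpl in WF.
      pose proof (wf_term_last _ _ WF _ _ _ _ eq_refl (or_introl eq_refl)).
      apply app_eq_nil in H0. destruct H0 as [_ H0]. rewrite H0 in WR. destruct WR.
    - assert (Hc' : In (EvResp i RespC) (proj E i)) by (apply in_proj; auto).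
      destruct (compl_commit _ _ _ _ (Hcs i) Hc') as [h' [k'' Hr]].
      assert (HP : proj P i = rev h' ++ [EvInv k'' InvTryC]).
      { rewrite <- (rev_involutive (proj P i)), Hr. reflexivity. }
      rewrite HprojH, HP, <- app_assoc in WF. simpl in WF.
      destruct (wf_tryC _ _ WF _ _ _ eq_refl) as [H0|[r H0]]; rewrite H0 in WR;
        simpl in WR; [destruct WR|destruct WR as [W|[]]; discriminate]. }
  assert (notdec : ~ decided Hs P i x).
  { intros [p [q [w [[Ex _] Hlast]]]].
    destruct E2 as [E2a _].
    apply (Hlast H HsH HPH p2 v'); auto.
    unfold P in Ex. rewrite nth_error_firstn in Ex.
    destruct (Nat.ltb_spec p n); [|discriminate]. unfold n in *; lia. }
  assert (projSj : proj S j = proj P j ++ proj E j) by (rewrite Heq, HC; apply proj_app).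
  destruct (exec_proj _ _ _ _ _ _ ErP) as [A [B HAB]].
  assert (InvS : In (EvInv j (InvRead x)) S).
  { apply inCS. rewrite HC. apply in_or_app; left.
    assert (In (EvInv j (InvRead x)) (proj P j)) by (rewrite HAB; apply in_or_app; simpl; auto).
    apply in_proj in H0; tauto. }
  assert (jinS : In j (tids S)) by (apply (in_tids _ _ InvS)).
  assert (precjj : ~ prec S j j).
  { intros [_ [_ Hp]]. destruct (In_nth_error _ _ InvS) as [p Hp'].
    specialize (Hp p p _ _ Hp' eq_refl Hp' eq_refl). lia. }
  assert (Key : forall V, legal V -> (exists X Y, proj V j = X ++ proj S j ++ Y) ->
            (forall k, ~ In (EvInv k (InvWrite x v)) V) -> False).
  { intros V Hl [X [Y HXY]] Hnw.
    assert (Hrd : In (InvRead x, Some (RespVal v)) (op_execs V)).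
    { apply (op_exec_of_proj V j (X ++ A) _ _ (B ++ proj E j ++ Y)).
      rewrite HXY, projSj, HAB. repeat (rewrite <- app_assoc; simpl). reflexivity. }
    apply (seq_contra v x (restrict_var x V) 0); auto.
    - intros y r Hin. unfold restrict_var in Hin. apply filter_In in Hin.
      destruct Hin as [Hin Hf]. simpl in Hf. apply Nat.eqb_eq in Hf. subst y.
      destruct (op_execs_in _ _ _ Hin) as [k Hk]. exact (Hnw k Hk).
    - unfold restrict_var. apply filter_In. split; auto. simpl. apply Nat.eqb_refl.
    - exact (Hl x). }
  destruct (Hall j jinS) as [Hcj Hncj].
  destruct (classic (committed S j)) as [Hc|Hc].
  - destruct (Hcj Hc) as [V [Hvis Hl]].
    apply (Key V Hl).
    + exists [], []. rewrite app_nil_r. simpl. apply (subhist_proj _ _ _ Hvis). auto.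
    + intros k Hk. destruct (subhist_in _ _ _ Hvis _ Hk) as [HS Hp].
      apply writeS in HS. subst k. simpl in Hp.
      destruct Hp as [Hp|[Hp _]]; [apply Hij; auto|apply notcommit; auto].
  - destruct (Hncj Hc) as [V [[f [HV Hf]] Hl]].
    apply (Key V Hl).
    + destruct (@concat_split tx Event f _ _ jinS) as [X [Y HXY]].
      exists (proj X j), (proj Y j). rewrite HV. transitivity (proj (X ++ f j ++ Y) j); [f_equal; exact HXY|]. rewrite !proj_app.
      destruct (Hf j jinS) as [[_ Hfj]|[[[_ [_ [Hpj _]]] _]|[Hnf _]]].
      * rewrite Hfj, proj_proj. reflexivity.
      * contradiction.
      * exfalso; apply Hnf; auto.
    + intros k Hk. rewrite HV in Hk. apply in_concat in Hk.
      destruct Hk as [l [Hl1 Hl2]]. apply in_map_iff in Hl1.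
      destruct Hl1 as [k' [<- Hk']].
      destruct (Hf k' Hk') as [[Hfull Hfk]|[[Hopt [Hnil|[d [Hd Hfk]]]]|[_ [_ Hfk]]]].
      * rewrite Hfk in Hl2. apply in_proj in Hl2. destruct Hl2 as [HS Ht].
        apply writeS in HS. simpl in Ht. subst k; subst k'.
        destruct Hfull as [Hp|[Hp _]]; [apply Hij; auto|apply notcommit; auto].
      * rewrite Hnil in Hl2; destruct Hl2.
      * rewrite Hfk in Hl2. unfold downC in Hl2. apply in_app_or in Hl2.
        destruct Hl2 as [Hl2|Hl2].
        -- destruct (keep_ops_in d _ _ (le_n _) _ Hl2) as [Hin Hdx].
           apply in_proj in Hin. destruct Hin as [HS Ht].
           apply writeS in HS. simpl in Ht. subst k; subst k'.
           apply notdec. apply Hd. eapply Hdx; eauto.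
        -- simpl in Hl2. destruct Hl2 as [W|[W|[]]]; discriminate.
      * rewrite Hfk in Hl2; destruct Hl2.
Qed.
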